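(* Let $\mathbf P$ be a collection of quartiles and let $\mathbf D$ be a collection of quartiles such that the tiles $\{Q_3:Q\in\mathbf D\}$ are pairwise disjoint. Let $\mathbf P':=\{P\in\mathbf P: P_1\le Q_3\text{ for some }Q\in\mathbf D\}$. Then for every pair $P\in\mathbf P$, $Q\in\mathbf D$ with $P_1\cap Q_3\ne\emptyset$ we have $\omega_{Q_3}\subseteq\omega_{P_1}$ if and only if $P\in\mathbf P'$.
   Context: A tile is a rectangle $I\times\omega$ of area one with $I,\omega$ dyadic intervals. A quartile is $P=I_P\times\omega_P=[2^{-k}n,2^{-k}(n+1))\times[2^{k+2}l,2^{k+2}(l+1))$ ($k,n\in\mathbb Z$, $l\ge0$ integers) with sub-tiles $P_i:=I_P\times[2^k(4l+i-1),2^k(4l+i))$, $i=1,2,3$; $\omega_{P_i}$ denotes the frequency interval of $P_i$. For tiles $P,P'$ write $P'<P$ if $I_{P'}\subsetneq I_P$ and $\omega_P\subseteq\omega_{P'}$, and $P'\le P$ if $P'<P$ or $P'=P$. *)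

(* Defs.v *)
From mathcomp Require Import all_boot all_order all_algebra.
From mathcomp Require Import reals.
Set Implicit Arguments. Unset Strict Implicit. Unset Printing Implicit Defensive.
Import Order.TTheory GRing.Theory Num.Theory.
Local Open Scope ring_scope.

Section Tiles.
Variable R : realType.

Definition dint (j n : int) : R -> Prop :=
  fun x => n%:~R * (2%:R : R) ^ j <= x /\ x < (n + 1)%:~R * (2%:R : R) ^ j.

Definition incl (A B : R -> Prop) : Prop := forall x, A x -> B x.

End Tiles.

(* A tile I x omega of area one:
   I = [2^-k n, 2^-k (n+1)),  omega = [2^k m, 2^k (m+1)). *)
Record tile := Tile { t_k : int; t_n : int; t_m : int }.

Definition tI (R : realType) (t : tile) : R -> Prop := @dint R (- t_k t) (t_n t).
Definition tw (R : realType) (t : tile) : R -> Prop := @dint R (t_k t) (t_m t).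
Definition tile_set (R : realType) (t : tile) : R * R -> Prop :=
  fun p => @tI R t p.1 /\ @tw R t p.2.

Definition tile_lt (R : realType) (P' P : tile) : Prop :=
  incl (@tI R P') (@tI R P) /\ ~ incl (@tI R P) (@tI R P') /\
  incl (@tw R P) (@tw R P').
Definition tile_le (R : realType) (P' P : tile) : Prop :=
  @tile_lt R P' P \/ P' = P.

Record quartile := Quartile { q_k : int; q_n : int; q_l : nat }.

Definition qI (R : realType) (P : quartile) : R -> Prop := @dint R (- q_k P) (q_n P).
Definition qw (R : realType) (P : quartile) : R -> Prop := @dint R (q_k P + 2) (q_l P)%:Z.

Definition subtile (P : quartile) (i : nat) : tile :=
  Tile (q_k P) (q_n P) ((4 * q_l P + i)%:Z - 1).

(* Main.v *)
Require Import Defs.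
From mathcomp Require Import all_boot all_order all_algebra.
From mathcomp Require Import reals zify ring lra.
From Stdlib Require Import Classical.
Set Implicit Arguments. Unset Strict Implicit.
Import Order.TTheory GRing.Theory Num.Theory.
Local Open Scope ring_scope.

Section H.
Variable R : realType.

Lemma cmp_le (u : R) (c d : int) : 0 < u -> (c%:~R * u <= d%:~R * u) = (c <= d).
Proof. by move=> u0; rewrite ler_pM2r // ler_int. Qed.
Lemma cmp_lt (u : R) (c d : int) : 0 < u -> (c%:~R * u < d%:~R * u) = (c < d).
Proof. by move=> u0; rewrite ltr_pM2r // ltr_int. Qed.

Lemma scaleN (u : R) (b N : int) :
  b%:~R * (u * N%:~R) = (b * N)%:~R * u.
Proof. by rewrite intrM; ring. Qed.

Lemma pow2_split (j j' : int) : j <= j' ->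
  exists N : int, 0 < N /\ (j < j' -> 1 < N) /\
    (2%:R : R) ^ j' = (2%:R : R) ^ j * N%:~R.
Proof.
move=> le; have [k ->] : exists k : nat, j' = j + Posz k.
  by exists `|j' - j|%N; timeout 10 lia.
exists (2 ^+ k)%R; split; last split.
- by rewrite exprn_gt0.
- move=> lt; have h : (0 < k)%N by timeout 10 lia.
  case: k h {lt le} => // k _; rewrite exprS.
  have : 0 < (2:int) ^+ k by rewrite exprn_gt0.
  timeout 10 lia.
- rewrite expfzDr ?pnatr_eq0 // -exprnP; congr (_ * _).
  by rewrite rmorphXn.
Qed.
Lemma L1 (j n j' n' : int) (x : R) : dint j n x -> dint j' n' x -> j <= j' ->
  incl (@dint R j n) (dint j' n').
Proof.
move=> [h1 h2] [h3 h4] le.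
have [N [N0 [_ E]]] := pow2_split le.
have u0 : (0 : R) < 2%:R ^ j by rewrite exprz_gt0.
move: h3 h4; rewrite E !scaleN => h3 h4.
have a1 : n' * N < n + 1.
  rewrite -(cmp_lt _ _ u0); exact: le_lt_trans h3 h2.
have a2 : n < (n' + 1) * N.
  rewrite -(cmp_lt _ _ u0); exact: le_lt_trans h1 h4.
have b1 : n' * N <= n by timeout 10 lia.
have b2 : n + 1 <= (n' + 1) * N by timeout 10 lia.
move=> y [y1 y2]; rewrite /dint E !scaleN.
have := b1; rewrite -(cmp_le _ _ u0) => c1.
have := b2; rewrite -(cmp_le _ _ u0) => c2.
split; [exact: le_trans c1 y1 | exact: lt_le_trans y2 c2].
Qed.

Lemma pt (j n : int) : dint j n (n%:~R * (2%:R : R) ^ j).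
Proof.
have u0 : (0 : R) < 2%:R ^ j by rewrite exprz_gt0.
by split => //; rewrite cmp_lt // ltzD1.
Qed.

Lemma L2 (j n j' n' : int) : incl (@dint R j n) (dint j' n') -> j <= j'.
Proof.
move=> H; case: (lerP j j') => // lt.
have [N [N0 [N1 E]]] := pow2_split (ltW lt).
have u0 : (0 : R) < 2%:R ^ j' by rewrite exprz_gt0.
have p1 := H _ (pt j n).
have p2 : dint j n ((n * N + 1)%:~R * (2%:R : R) ^ j').
  rewrite /dint E !scaleN; split.
  - by rewrite cmp_le //; timeout 10 lia.
  - by rewrite cmp_lt //; timeout 10 lia.
have {}p2 := H _ p2.
move: p1 p2; rewrite /dint E scaleN !cmp_le // !cmp_lt //.
timeout 10 lia.
Qed.

Lemma L3 (j n n' : int) : incl (@dint R j n) (dint j n') -> n = n'.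
Proof.
move=> H; have := H _ (pt j n); rewrite /dint.
have u0 : (0 : R) < 2%:R ^ j by rewrite exprz_gt0.
rewrite cmp_le // cmp_lt //; timeout 10 lia.
Qed.

Lemma nest (j n j' n' : int) (x : R) : dint j n x -> dint j' n' x ->
  incl (@dint R j n) (dint j' n') \/ incl (@dint R j' n') (dint j n).
Proof.
move=> h h'; case: (lerP j j') => le.
- by left; apply: L1 h h' le.
- by right; apply: L1 h' h (ltW le).
Qed.
End H.

Theorem lemma6p1 (R : realType) (PP DD : quartile -> Prop) :
  (forall Q Q', DD Q -> DD Q' -> subtile Q 3 <> subtile Q' 3 ->
     forall p, ~ (@tile_set R (subtile Q 3) p /\ @tile_set R (subtile Q' 3) p)) ->
  let PP' := fun P => PP P /\ exists Q, DD Q /\ @tile_le R (subtile P 1) (subtile Q 3) in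
  forall P Q, PP P -> DD Q ->
    (exists p, @tile_set R (subtile P 1) p /\ @tile_set R (subtile Q 3) p) ->
    (incl (@tw R (subtile Q 3)) (@tw R (subtile P 1)) <-> PP' P).
Proof.
move=> Hdis PP' P Q HP HQ [[x xi] [[hx1 hxi1] [hx3 hxi3]]].
move: hx1 hxi1 hx3 hxi3; rewrite /tw /tI /= => hx1 hxi1 hx3 hxi3.
split.
- move=> H; split => //; exists Q; split => //; left.
  have kle := L2 H.
  rewrite /tile_lt /tw /tI /=; split; last split => //.
  + by apply: L1 hx1 hx3 _; rewrite lerN2.
  + case: (ltrP (q_k Q) (q_k P)) => lt.
    * by move/L2; rewrite lerN2 leNgt lt.
    * have e : q_k Q = q_k P by apply/eqP; rewrite eq_le kle lt.
      move: H; rewrite e => /L3; timeout 10 lia.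
- move=> [_ [Q' [HQ' [Hlt|Heq]]]]; last first.
    by move: Heq => [_ _]; timeout 10 lia.
  move: Hlt; rewrite /tile_lt /tw /tI /= => [[HI [_ Hw]]].
  case: (classic (subtile Q 3 = subtile Q' 3)) => [e|ne].
    by case: e => e1 _ e3; rewrite e1 e3.
  case: (nest hxi3 hxi1) => // Hn; exfalso.
  apply: (Hdis _ _ HQ HQ' ne (x, (((4 * q_l Q' + 3)%:Z - 1)%:~R * (2%:R : R) ^ q_k Q'))).
  rewrite /tile_set /tw /tI /=; split; split => //.
  + by apply: Hn; apply: Hw; apply: pt.
  + by apply: HI.
  + by apply: pt.
Qed.
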